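(* Let $k\ge 2$ and let $m_1<m_2<\dots<m_k$ be positive integers. Then the complete $k$-partite graph $K_{m_1,m_2,\dots,m_k}$ satisfies $IDI(K_{m_1,m_2,\dots,m_k})=m_k$.
   Context: $K_{m_1,\dots,m_k}$ is the complete $k$-partite graph whose parts have sizes $m_1,\dots,m_k$. For a finite simple connected graph $G=(V,E)$ with diameter $d$, a rank assignment is a function $f:V\to\mathbb{R}$; under $f$, the string of a vertex $v$ is the $d$-vector whose $i$-th coordinate is the sum of $f(w)$ over all vertices $w$ with $d(v,w)=i$. The ID-index $IDI(G)$ is the minimum $k$ such that there exists $f:V\to\mathbb{R}$ with $|f(V)|=k$ under which all vertices have distinct strings. *)

(* Defs.v *)
From HB Require Import structures.
From mathcomp Require Import all_boot all_order all_algebra.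
From mathcomp Require Import Rstruct.
From Stdlib Require Import Rdefinitions.
Set Implicit Arguments. Unset Strict Implicit. Unset Printing Implicit Defensive.
Import GRing.Theory.
Local Open Scope ring_scope.
Notation R := Rdefinitions.R.

Section Graph.
Variables (T : finType) (adj : rel T).

Fixpoint ball (n : nat) (x : T) : {set T} :=
  match n with
  | 0 => [set x]
  | n'.+1 => ball n' x :|: [set y | [exists z in ball n' x, adj z y]]
  end.

(* graph distance: least n with y in ball n x (#|T| if unreachable) *)
Definition dist (x y : T) : nat := find (fun n => y \in ball n x) (iota 0 #|T|).

Definition connected_graph : Prop := forall x y : T, y \in ball #|T| x.

Definition diameter : nat := \max_(x : T) \max_(y : T) dist x y.

Definition vstring (f : T -> R) (v : T) : seq R :=
  [seq \sum_(w : T | dist v w == i) f w | i <- iota 1 diameter].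

Definition distinct_strings (f : T -> R) : Prop := injective (vstring f).

Definition num_ranks (f : T -> R) : nat := size (undup (codom f)).

Definition IDI_is (k : nat) : Prop :=
  (exists f : T -> R, distinct_strings f /\ num_ranks f = k) /\
  (forall f : T -> R, distinct_strings f -> leq k (num_ranks f)).
End Graph.

(* complete k-partite graph with parts of sizes m 0, ..., m (k-1) *)
Definition kpart_vertex (k : nat) (m : nat -> nat) : finType := {i : 'I_k & 'I_(m i)}.

Definition kpart_adj (k : nat) (m : nat -> nat) : rel (kpart_vertex k m) :=
  fun x y => tag x != tag y.
Arguments kpart_adj k m : clear implicits.

(* Main.v *)
Require Import Defs.
From HB Require Import structures.
From mathcomp Require Import all_boot all_order all_algebra.
From mathcomp Require Import Rstruct.
From Stdlib Require Import Rdefinitions.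
Import GRing.Theory Num.Theory.

Section KP.
Variables (k : nat) (m : nat -> nat).
Hypothesis hk : 2 <= k.
Hypothesis hm0 : forall i, i < k -> 0 < m i.
Hypothesis hinc : forall i, i.+1 < k -> m i < m i.+1.

Local Notation T := (kpart_vertex k m).
Local Notation adj := (kpart_adj k m).

Lemma mono i j : i < j -> j < k -> m i < m j.
Proof.
elim: j => // j IH lij ljk.
rewrite ltnS leq_eqVlt in lij; case/orP: lij => [/eqP->|lij]; first exact: hinc.
exact: ltn_trans (IH lij (ltnW ljk)) (hinc _ ljk).
Qed.

Lemma lk : k.-1 < k. Proof. by case: k hk. Qed.
Definition lastk : 'I_k := Ordinal lk.
Definition M := m k.-1.

Lemma M2 : 2 <= M.
Proof.
rewrite /M. have h0 : 0 < k.-1 by case: k hk => [|[|]].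
have := mono _ _ h0 lk. have := hm0 _ (ltn_trans h0 lk). by move=> a b; exact: leq_ltn_trans a b.
Qed.

Lemma mle i : i < k -> m i <= M.
Proof.
move=> ik; rewrite /M; have : i <= k.-1 by rewrite -ltnS prednK // (leq_ltn_trans _ ik).
rewrite leq_eqVlt => /orP[/eqP->//|h]; exact/ltnW/(mono _ _ h lk).
Qed.

Lemma exists1 (x : T) (P : pred T) : [exists z in [set x], P z] = P x.
Proof.
apply/existsP/idP => [[z /andP[]]|]; first by rewrite in_set1 => /eqP->.
by move=> Px; exists x; rewrite in_set1 eqxx.
Qed.

Lemma ball1 (x y : T) : (y \in ball adj 1 x) = (y == x) || (tag x != tag y).
Proof. by rewrite /= in_setU in_set in_set1 exists1. Qed.

Lemma ball2 (x y : T) : y \in ball adj 2 x.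
Proof.
rewrite /= in_setU; apply/orP; right; rewrite in_set.
have [i hi] : exists i : 'I_k, tag x != i.
  have k0 : 0 < k by case: k hk.
  have k1 : 1 < k by [].
  case: (eqVneq (tag x) (Ordinal k0)) => e.
    by exists (Ordinal k1); rewrite e; apply/eqP => /(congr1 val).
  by exists (Ordinal k0).
have [j _] : exists j : 'I_(m i), true by exists (Ordinal (hm0 _ (ltn_ord i))).
case: (eqVneq (tag x) (tag y)) => e.
  apply/existsP; exists (Tagged (fun i : 'I_k => 'I_(m i)) j); apply/andP; split.
    by rewrite ball1 /= hi orbT.
  by rewrite /kpart_adj /= -e eq_sym.
apply/existsP; exists x; rewrite ball1 eqxx /=.
exact: e.

Qed.

Definition v0 : T := Tagged (fun i : 'I_k => 'I_(m i)) (Ordinal (ltn_trans (ltnSn 0) M2) : 'I_(m lastk)).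
Definition v1 : T := Tagged (fun i : 'I_k => 'I_(m i)) (Ordinal M2 : 'I_(m lastk)).
Lemma card3 : 3 <= #|T|.
Proof.
have k0 : 0 < k by case: k hk.
pose v2 : T := Tagged (fun i : 'I_k => 'I_(m i)) (Ordinal (hm0 _ k0) : 'I_(m (Ordinal k0))).
rewrite cardE; apply: (@uniq_leq_size _ [:: v0; v1; v2]); last by move=> z; rewrite mem_enum.
rewrite /= !inE; apply/andP; split.
  apply/norP; split; first by apply/eqP => /(congr1 (fun v : T => nat_of_ord (tagged v))).
  by apply/eqP => /(congr1 (fun v : T => nat_of_ord (tag v))) /=; case: k hk => [|[|]].
rewrite andbT; apply/eqP => /(congr1 (fun v : T => nat_of_ord (tag v))) /=; case: k hk => [|[|]] //.
Qed.

Lemma dist_eq (x y : T) : dist adj x y = if y == x then 0 else if tag x != tag y then 1 else 2.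
Proof.
rewrite /dist.
have -> : iota 0 #|T| = [:: 0, 1, 2 & iota 3 (#|T| - 3)].
  by rewrite -{1}(subnKC card3) iotaD.
rewrite /= -/(ball adj 1 x) -/(ball adj 2 x) in_set1 ball1 ball2.
by case: (y == x) => //=; case: (tag x != tag y).
Qed.

Local Open Scope ring_scope.

Lemma diam2 : (2 <= diameter adj)%nat.
Proof.
rewrite /diameter.
apply: (leq_trans _ (leq_bigmax v0)).
apply: (leq_trans _ (leq_bigmax v1)).
rewrite dist_eq /= eqxx.
by case: eqP => // /(congr1 (fun v : T => nat_of_ord (tagged v))).
Qed.

Lemma nth_vstring (f : T -> R) v i : (i < 2)%nat ->
  nth 0 (vstring adj f v) i = \sum_(w | dist adj v w == i.+1) f w.
Proof.
move=> hi; rewrite /vstring (nth_map 0%nat) ?size_iota ?nth_iota //.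
  exact: leq_trans hi diam2.
exact: leq_trans hi diam2.
Qed.

Definition tg (j : 'I_M) : T := Tagged (fun i : 'I_k => 'I_(m i)) (j : 'I_(m lastk)).

Lemma lower (f : T -> R) : distinct_strings adj f -> (M <= num_ranks f)%nat.
Proof.
move=> hf.
have inj : injective (fun j => f (tg j)).
  move=> j1 j2 e; apply/eqP; apply: contraT => ne.
  suff : tg j1 = tg j2.
    move=> /(congr1 (fun v : T => nat_of_ord (tagged v))) /= h.
    by move: ne; rewrite (val_inj h) eqxx.
  apply: hf; rewrite /vstring; apply: eq_map => i.
  have ab : tg j1 != tg j2.
    apply: contra ne => /eqP /(congr1 (fun v : T => nat_of_ord (tagged v))) /= h.
    by rewrite (val_inj h).
  have ba : tg j2 != tg j1 by rewrite eq_sym.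
  rewrite !(big_mkcond (fun w => dist adj _ w == i)).
  rewrite (bigD1 (tg j1)) //= (bigD1 (tg j2)) //=.
  rewrite [in RHS](bigD1 (tg j1)) //= [in RHS](bigD1 (tg j2)) //=.
  rewrite !dist_eq !eqxx (negbTE ab) (negbTE ba) /= -/(tg j1) -/(tg j2) e.
  rewrite addrCA; congr (_ + (_ + _)).
  apply: eq_bigr => w /andP[w1 w2]; rewrite !dist_eq (negbTE w1) (negbTE w2) //.
rewrite /num_ranks.
have := @uniq_leq_size _ [seq f (tg j) | j <- enum 'I_M] (undup (codom f)).
rewrite size_map size_enum_ord; apply.
  by rewrite (map_inj_uniq inj) enum_uniq.
by move=> x /mapP[j _ ->]; rewrite mem_undup codom_f.
Qed.

Definition f0 (v : T) : R := (nat_of_ord (tagged v))%:R.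
Definition Q (i : 'I_k) : R := \sum_(w : T | tag w == i) f0 w.

Lemma Qval i : Q i = ('C(m i, 2))%:R.
Proof.
rewrite -bin2_sum big_mkord natr_sum.
rewrite (big_tag (fun (i : 'I_k) (j : 'I_(m i)) => (nat_of_ord j)%:R : R) i).
rewrite /Q; apply: eq_big => // w /eqP e.
rewrite (untagE _ _ e); case: w e => /= i' j e; subst i; by [].
Qed.

Lemma bin2_lt a b : (0 < a)%nat -> (a < b)%nat -> ('C(a, 2) < 'C(b, 2))%nat.
Proof.
move=> a0 ab; apply: leq_trans (leq_bin2l 2 ab).
by rewrite binS bin1 -addn1 leq_add2l.
Qed.

Lemma Qinj (i j : 'I_k) : Q i = Q j -> i = j.
Proof.
rewrite !Qval => /eqP; rewrite eqr_nat => /eqP e.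
case: (ltngtP i j) => [lt|gt|eq]; last exact: val_inj.
- have := bin2_lt _ _ (hm0 _ (ltn_ord i)) (mono _ _ lt (ltn_ord j)); by rewrite e ltnn.
- have := bin2_lt _ _ (hm0 _ (ltn_ord j)) (mono _ _ gt (ltn_ord i)); by rewrite e ltnn.
Qed.

Lemma tag_ext (v w : T) : tag v = tag w -> nat_of_ord (tagged v) = nat_of_ord (tagged w) -> v = w.
Proof.
case: v w => [i a] [j b] /= e; subst j => h.
by congr (Tagged _ _); apply: val_inj.
Qed.

Lemma S1 v : \sum_(w | dist adj v w == 1%nat) f0 w + Q (tag v) = \sum_w f0 w.
Proof.
rewrite [RHS](bigID (fun w : T => tag w == tag v)) /= [RHS]addrC /Q; congr (_ + _).
apply: eq_bigl => w; rewrite dist_eq.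
case: (eqVneq w v) => [->|_]; first by rewrite !eqxx.
by rewrite [tag w == _]eq_sym; case: (tag v == tag w).
Qed.

Lemma S2 v : Q (tag v) = f0 v + \sum_(w | dist adj v w == 2%nat) f0 w.
Proof.
rewrite /Q (bigD1 v) //=; congr (_ + _); apply: eq_bigl => w; rewrite dist_eq.
case: (eqVneq w v) => [->|_]; first by rewrite !eqxx andbF.
by rewrite andbT [tag w == _]eq_sym; case: (tag v == tag w).
Qed.

Lemma upper_inj : distinct_strings adj f0.
Proof.
move=> v w h.
have h1 := congr1 (fun s => nth 0 s 0) h.
have h2 := congr1 (fun s => nth 0 s 1) h.
rewrite /= !nth_vstring // in h1 h2.
have eQ : Q (tag v) = Q (tag w).
  by apply: (addrI (\sum_(w | dist adj v w == 1%nat) f0 w)); rewrite S1 h1 S1.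
have et := Qinj _ _ eQ.
apply: tag_ext => //.
move: eQ; rewrite !S2 h2 => /addIr /eqP; rewrite eqr_nat => /eqP.
by [].
Qed.

Lemma upper_nr : num_ranks f0 = M.
Proof.
rewrite /num_ranks.
have P : perm_eq (undup (codom f0)) [seq (n%:R : R) | n <- iota 0 M].
  apply: uniq_perm; first exact: undup_uniq.
    rewrite map_inj_uniq ?iota_uniq // => a b /eqP; rewrite eqr_nat => /eqP.
    by [].
  move=> x; rewrite mem_undup; apply/codomP/mapP.
    case=> v ->; exists (nat_of_ord (tagged v)) => //.
    rewrite mem_iota /= add0n; exact: leq_trans (ltn_ord _) (mle _ (ltn_ord _)).
  case=> n; rewrite mem_iota add0n /= => hn ->.
  by exists (tg (Ordinal hn)).
by rewrite (perm_size P) size_map size_iota.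
Qed.
End KP.

Theorem mainTheorem12 (k : nat) (m : nat -> nat) :
  2 <= k ->
  (forall i, i < k -> 0 < m i) ->
  (forall i, i.+1 < k -> m i < m i.+1) ->
  IDI_is (kpart_adj k m) (m k.-1).
Proof.
move=> hk hm0 hinc; split.
  exists (f0 k m); split; first exact: upper_inj.
  exact: upper_nr.
move=> f hf; exact: lower hf.
Qed.
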